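(* For all integers $1\le s\le t<n$, $$\tilde{R}(\dot C_t^{(b)}\sqcup \dot C_s^{(r)},Q_n)=n+t+1.$$
   Context: $C_t$ is the chain on $t$ vertices; $\dot C_t^{(b)}$ is it colored entirely blue and $\dot C_s^{(r)}$ is $C_s$ colored entirely red. The parallel composition $\dot P_1\sqcup\dot P_2$ is the colored poset consisting of disjoint copies of $\dot P_1$ and $\dot P_2$ with every vertex of one incomparable to every vertex of the other. $Q_N$ is the Boolean lattice of all subsets of an $N$-element set ordered by inclusion. In a blue/red coloring of $Q_N$, a copy of a colored poset $\dot P$ is an induced subposet isomorphic to $P$ with matching colors. The poset Erdős–Hajnal number $\tilde{R}(\dot P,Q_n)$ is the minimum $N$ such that every blue/red coloring of $Q_N$ contains a copy of $\dot P$ or a monochromatic induced copy of $Q_n$. *)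

(* Defs.v *)
From mathcomp Require Import all_boot.
Set Implicit Arguments. Unset Strict Implicit. Unset Printing Implicit Defensive.

(* Boolean lattice Q_N = {set 'I_N} ordered by inclusion (\subset).
   A blue/red coloring of Q_N is a map c : {set 'I_N} -> bool,
   with convention: true = blue, false = red. *)
Definition coloring (N : nat) := {set 'I_N} -> bool.

Definition has_copy (V : finType) (le : rel V) (col : V -> bool)
  (N : nat) (c : coloring N) : Prop :=
  exists f : V -> {set 'I_N},
    injective f /\ (forall x y, le x y = (f x \subset f y)) /\
    (forall x, c (f x) = col x).

Definition has_mono_Qn (n N : nat) (c : coloring N) : Prop :=
  exists f : {set 'I_n} -> {set 'I_N},
    injective f /\ (forall A B : {set 'I_n}, (A \subset B) = (f A \subset f B)) /\
    exists b : bool, forall A, c (f A) = b.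

Definition EH_property (V : finType) (le : rel V) (col : V -> bool)
  (n N : nat) : Prop :=
  forall c : coloring N, has_copy le col c \/ has_mono_Qn n c.

(* tilde R(P, Q_n) = m, i.e. m is the minimum N with the property. *)
Definition EH_number_is (V : finType) (le : rel V) (col : V -> bool)
  (n m : nat) : Prop :=
  EH_property le col n m /\ (forall N, N < m -> ~ EH_property le col n N).

(* The colored poset  C_t^(b) |_| C_s^(r) : vertices 'I_t + 'I_s,
   each summand a chain ordered as the naturals, the two components
   mutually incomparable; left chain blue, right chain red. *)
Definition chains_le (t s : nat) : rel ('I_t + 'I_s)%type :=
  fun x y =>
    match x, y with
    | inl i, inl j => (i <= j)%N
    | inr i, inr j => (i <= j)%N
    | _, _ => false
    end.

Definition chains_col (t s : nat) : ('I_t + 'I_s)%type -> bool :=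
  fun x => match x with inl _ => true | inr _ => false end.

(* Main.v *)
Require Import Defs.
From mathcomp Require Import all_boot.
From mathcomp Require Import zify.
From Stdlib Require Import ClassicalEpsilon.
Set Implicit Arguments. Unset Strict Implicit. Unset Printing Implicit Defensive.

Definition pb (P : Prop) : bool := if excluded_middle_informative P then true else false.
Lemma pbP P : reflect P (pb P).
Proof. by rewrite /pb; case: excluded_middle_informative => h; constructor. Qed.

Lemma card_chain (T : finType) (g : nat -> {set T}) k :
  (forall i, i < k -> g i \proper g i.+1) -> forall i, i <= k -> #|g 0| + i <= #|g i|.
Proof.
move=> H; elim=> [|i IH] Hi; first by rewrite addn0.
have := proper_card (H i Hi). have := IH (ltnW Hi). lia.
Qed.

Definition chainP N k (g : nat -> {set 'I_N}) :=
  forall i j, i < k -> j < k -> (i <= j) = (g i \subset g j).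

Lemma chain_ext N k (g : nat -> {set 'I_N}) (S T : {set 'I_N}) :
  chainP k g -> (forall i, i < k -> g i \subset S) -> S \proper T ->
  chainP k.+1 (fun i => if i < k then g i else T).
Proof.
move=> Hg HS ST i j; rewrite !ltnS => Hi Hj.
case: ltnP => hi; case: ltnP => hj.
- exact: Hg.
- have -> : i <= j by lia.
  by symmetry; apply: subset_trans (HS _ hi) (proper_sub ST).
- have -> : (i <= j) = false by lia.
  symmetry; apply/negP => sub.
  move: ST; rewrite properE => /andP [_ /negP]; apply.
  exact: subset_trans sub (HS _ hj).
- have -> : i <= j by lia.
  by rewrite subxx.
Qed.

Lemma core N n m (c : {set 'I_N} -> bool) (b : bool) (D : {set 'I_N} -> bool)
  (phi : {set 'I_n} -> nat -> {set 'I_N}) :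
  (forall (Z Z' : {set 'I_n}) j j', Z \subset Z' -> j <= j' -> j' <= m -> phi Z j \subset phi Z' j') ->
  (forall (Z : {set 'I_n}) j, j < m -> phi Z j \proper phi Z j.+1) ->
  (forall (Z Z' : {set 'I_n}) j j', phi Z j \subset phi Z' j' -> Z \subset Z') ->
  (forall (Z : {set 'I_n}) j, j <= m -> D (phi Z j)) ->
  (exists g, chainP m.+1 g /\ forall i, i < m.+1 -> c (g i) = b /\ D (g i)) \/
  has_mono_Qn n c.
Proof.
move=> H1 H2 H3 H4.
pose good T := (c T == b) && D T.
pose P (S : {set 'I_N}) k := exists g, chainP k g /\ forall i, i < k -> good (g i) /\ g i \subset S.
case: (classic (exists S, P S m.+1)) => [[S [g [Hg Hgood]]]|NP].
  left; exists g; split=> // i Hi.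
  by have [/andP [/eqP -> ->] _] := Hgood i Hi.
right.
have NP' : forall S : {set 'I_N}, ~ P S m.+1 by move=> S HS; apply: NP; exists S.
pose Q Z := fun j => ~~ pb (P (phi Z j) j.+1).
have exQ : forall Z : {set 'I_n}, exists j, Q Z j.
  by move=> Z; exists m; rewrite /Q; apply/negP => /pbP /NP'.
pose js Z := ex_minn (exQ Z).
have jsP : forall Z : {set 'I_n}, [/\ ~ P (phi Z (js Z)) (js Z).+1,
    (forall j, j < js Z -> P (phi Z j) j.+1) & js Z <= m].
  move=> Z; rewrite /js; case: (ex_minnP (exQ Z)) => j Hj Hmin; split.
  - by move=> HP; move: Hj; rewrite /Q; move/pbP: HP => ->.
  - move=> j' lt; case: (classic (P (phi Z j') j'.+1)) => // nP.
    have : Q Z j' by rewrite /Q; apply/negP => /pbP.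
    by move/Hmin; rewrite leqNgt lt.
  - apply: Hmin; rewrite /Q; apply/negP => /pbP /NP'; done.
have jsmono : forall Z Z' : {set 'I_n}, Z \subset Z' -> js Z <= js Z'.
  move=> Z Z' ZZ'; rewrite leqNgt; apply/negP => lt.
  have [_ HZ _] := jsP Z; have [nP' _ jm'] := jsP Z'.
  apply: nP'; have [g [Hg Hgd]] := HZ _ lt.
  exists g; split=> // i Hi; have [gi sub] := Hgd i Hi; split=> //.
  exact: subset_trans sub (H1 _ _ _ _ ZZ' (leqnn _) jm').
pose F Z := phi Z (js Z).
have notgood : forall Z : {set 'I_n}, ~~ good (F Z).
  move=> Z; apply/negP => gd; have [nP HZ jm] := jsP Z.
  move: nP gd HZ jm; rewrite /F; case: (js Z) => [|j'] nP gd HZ jm.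
    apply: nP; exists (fun _ => phi Z 0); split.
      by move=> i k; rewrite !ltnS !leqn0 => /eqP-> /eqP->; rewrite subxx.
    by move=> i _; rewrite subxx gd.
  have [g [Hg Hgd]] := HZ j' (ltnSn _).
  apply: nP; exists (fun i => if i < j'.+1 then g i else phi Z j'.+1); split.
    apply: chain_ext Hg _ (H2 Z j' jm) => i Hi; by have [_ ->] := Hgd i Hi.
  move=> i Hi; case: ifP => hi; last by rewrite gd subxx.
  have [gi sub] := Hgd i hi; split=> //.
  exact: subset_trans sub (proper_sub (H2 Z j' jm)).
exists F; split.
  move=> Z Z' EZ; apply/eqP; rewrite eqEsubset; apply/andP; split.
    by apply: (H3 _ _ (js Z) (js Z')); rewrite -/(F Z) EZ subxx.
  by apply: (H3 _ _ (js Z') (js Z)); rewrite -/(F Z') -EZ subxx.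
split.
  move=> A B; apply/idP/idP => sub.
    by apply: H1 => //; [apply: jsmono | have [] := jsP B].
  exact: H3 sub.
exists (~~ b) => Z; have := notgood Z; rewrite /good.
have [_ _ jm] := jsP Z; rewrite (H4 _ _ jm) andbT.
have aux : forall x y : bool, ~~ (x == y) -> x = ~~ y by do 2!case.
exact: aux.
Qed.

Definition phiL N n (lt : n <= N) (a : 'I_N) (Z : {set 'I_n}) (j : nat) : {set 'I_N} :=
  [set a] :|: [set widen_ord lt z | z in Z] :|: [set i : 'I_N | n <= i < n + j].

Lemma layout N n m (lt : n <= N) (a a' : 'I_N) :
  n + m <= a -> n + m <= a' -> a != a' -> n + m < N ->
  [/\ (forall (Z Z' : {set 'I_n}) j j', Z \subset Z' -> j <= j' -> j' <= m ->
          phiL lt a Z j \subset phiL lt a Z' j'),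
      (forall (Z : {set 'I_n}) j, j < m -> phiL lt a Z j \proper phiL lt a Z j.+1),
      (forall (Z Z' : {set 'I_n}) j j', phiL lt a Z j \subset phiL lt a Z' j' -> Z \subset Z') &
      (forall (Z : {set 'I_n}) j, j <= m ->
          (a \in phiL lt a Z j) && (a' \notin phiL lt a Z j))].
Proof.
move=> ha ha' aa' nmN.
have H1 : forall (Z Z' : {set 'I_n}) j j', Z \subset Z' -> j <= j' ->
          phiL lt a Z j \subset phiL lt a Z' j'.
  move=> Z Z' j j' ZZ' jj'; apply: setUSS; first by apply: setUSS => //; apply: imsetS.
  apply/subsetP => i; rewrite !inE => /andP [h1 h2]; rewrite h1 /=; lia.
split.
- by move=> Z Z' j j' ZZ' jj' _; apply: H1.
- move=> Z j jm; apply/properP; split; first by apply: H1.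
  have lt' : n + j < N by lia.
  exists (Ordinal lt').
    by rewrite /phiL !inE /= leq_addr addnS ltnSn ?orbT.
  apply/negP; rewrite /phiL !inE => /orP [/orP [/eqP E | /imsetP [z _ E]] | /andP [_ h]].
  + by move: E => /(congr1 val) /= E; lia.
  + by move: E => /(congr1 val) /= E; have := ltn_ord z; lia.
  + by move: h => /=; lia.
- move=> Z Z' j j' /subsetP sub; apply/subsetP => z zZ.
  have : widen_ord lt z \in phiL lt a Z' j'.
    apply: sub; rewrite /phiL !inE; apply/orP; left; apply/orP; right.
    by apply/imsetP; exists z.
  rewrite /phiL !inE => /orP [/orP [/eqP E | /imsetP [z' z'Z E]] | /andP [h _]].
  + by move: E => /(congr1 val) /= E; have := ltn_ord z; lia.
  + by have -> : z = z' by apply/val_inj; move/(congr1 val): E.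
  + by move: h => /=; have := ltn_ord z; lia.
- move=> Z j jm; apply/andP; split; first by rewrite /phiL !inE eqxx.
  apply/negP; rewrite /phiL !inE => /orP [/orP [/eqP E | /imsetP [z _ E]] | /andP [_ h]].
  + by rewrite E eqxx in aa'.
  + by move: E => /(congr1 val) /= E; have := ltn_ord z; lia.
  + by move: h; lia.
Qed.

Lemma upper n m s : 1 <= s -> s <= m.+1 ->
  EH_property (@chains_le m.+1 s) (@chains_col m.+1 s) n (n + m.+1 + 1).
Proof.
move=> s1 sm c.
have lt : n <= n + m.+1 + 1 by lia.
have hx : n + m < n + m.+1 + 1 by lia.
have hy : n + m.+1 < n + m.+1 + 1 by lia.
pose x := Ordinal hx; pose y := Ordinal hy.
have xy : x != y by apply/eqP => /(congr1 val) /=; lia.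
have hxv : n + m <= x by [].
have hyv : n + m <= y by rewrite /=; lia.
have [L1 L2 L3 L4] := @layout _ n m lt x y hxv hyv xy hx.
have [K1 K2 K3 K4] := @layout _ n m lt y x hyv hxv (negbT (introF eqP (fun E => (elimF eqP (negbTE xy)) (esym E)))) hx.
have [[g1 [Hg1 Hc1]] | mono] :=
  @core _ n m c true (fun T => (x \in T) && (y \notin T)) (phiL lt x) L1 L2 L3 L4;
  last by right.
have [[g2 [Hg2 Hc2]] | mono] :=
  @core _ n m c false (fun T => (y \in T) && (x \notin T)) (phiL lt y) K1 K2 K3 K4;
  last by right.
left.
pose f := fun u : ('I_m.+1 + 'I_s)%type =>
  match u with inl i => g1 i | inr i => g2 i end.
have ford : forall u v, chains_le u v = (f u \subset f v).
  case=> [i|i] [j|j] /=.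
  - by apply: Hg1.
  - symmetry; apply/negP => /subsetP sub.
    have [_ /andP [xin _]] := Hc1 i (ltn_ord i).
    have [_ /andP [_ xout]] := Hc2 j (leq_trans (ltn_ord j) sm).
    by move: (sub _ xin); rewrite (negbTE xout).
  - symmetry; apply/negP => /subsetP sub.
    have [_ /andP [yin _]] := Hc2 i (leq_trans (ltn_ord i) sm).
    have [_ /andP [_ yout]] := Hc1 j (ltn_ord j).
    by move: (sub _ yin); rewrite (negbTE yout).
  - by apply: Hg2; apply: leq_trans (ltn_ord _) sm.
exists f; split.
  move=> u v E; have h1 := ford u v; have h2 := ford v u.
  rewrite E subxx in h1; rewrite E subxx in h2.
  case: u v E h1 h2 => [i|i] [j|j] //= E h1 h2; congr (_ _); apply/val_inj/anti_leq;
  by rewrite h1 h2.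
split=> //.
case=> [i|i] /=.
  by have [] := Hc1 i (ltn_ord i).
by have [] := Hc2 i (leq_trans (ltn_ord i) sm).
Qed.

Lemma lower n s t N : 0 < s -> 0 < t -> t < n -> N <= n + t ->
  ~ EH_property (@chains_le t s) (@chains_col t s) n N.
Proof.
case: t => [//|t] s0 _ tn NN H.
pose c : coloring N := fun X => (#|X| < t.+1) || (X == setT).
have [[f [finj [ford fcol]]]|[f [finj [ford [b fcol]]]]] := H c.
- pose S i := f (inl (inord i)).
  have Sprop : forall i, i < t -> S i \proper S i.+1.
    move=> i it; rewrite properEneq; apply/andP; split.
      rewrite /S (inj_eq finj); apply/eqP => -[] /(congr1 val) /=.
      rewrite inordK; last lia. rewrite inordK; last lia. lia.
    rewrite /S -ford /=. rewrite inordK; last lia. rewrite inordK; last lia. lia.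
  have hc := card_chain Sprop (leqnn t).
  have top : #|S t| < t.+1.
    have := fcol (inl (inord t)); rewrite /c /= -/(S t) => /orP [//|/eqP ET].
    have := ford (inr (Ordinal s0)) (inl (inord t)); rewrite /= -/(S t) ET subsetT.
    by [].
  have S0 : S 0 = set0 by apply: cards0_eq; lia.
  have := ford (inl (inord 0)) (inr (Ordinal s0)); rewrite /= -/(S 0) S0 sub0set.
  by [].
- pose A (i : nat) := [set j : 'I_n | j < i].
  pose F i := f (A i).
  have Fprop : forall i, i < n -> F i \proper F i.+1.
    move=> i i_n; rewrite properEneq; apply/andP; split.
      rewrite /F (inj_eq finj); apply/eqP => /setP /(_ (Ordinal i_n)).
      by rewrite !inE /= ltnn ltnSn.
    rewrite /F -ford; apply/subsetP => j; rewrite !inE => h; exact: ltnW.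
  have hc := card_chain Fprop.
  case: b fcol => fcol.
  + have ht := hc t.+1 (ltnW tn).
    have : F t.+1 == setT.
      have := fcol (A t.+1); rewrite /c -/(F t.+1) => /orP [|//]; lia.
    move/eqP => Ft. have := Fprop t.+1 tn; rewrite properE Ft subsetT andbF.
    by [].
  + have h0 : t.+1 <= #|F 0|.
      by have := fcol (A 0); rewrite /c -/(F 0) => /norP [h _]; rewrite leqNgt.
    have hn := hc n (leqnn n).
    have Fn : F n == setT.
      rewrite eqEcard subsetT cardsT card_ord /=. apply: leq_trans NN _; apply: leq_trans _ hn; rewrite [n + _]addnC leq_add2r; exact: h0.
    by have := fcol (A n); rewrite /c -/(F n) Fn orbT.
Qed.

Theorem lemma11 (n s t : nat) :
  1 <= s -> s <= t -> t < n ->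
  EH_number_is (@chains_le t s) (@chains_col t s) n (n + t + 1).
Proof.
move=> s1 st tn; split.
  case: t st tn => [|m] st tn; first by lia.
  exact: upper.
move=> N HN; apply: lower => //; lia.
Qed.
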